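(* Let $H_n=\sum_{j=1}^n\frac1j$, let $\gamma$ be the Euler–Mascheroni constant, $z^{\overline{k}} = z(z+1) \cdots (z + k -1)$ the rising factorial, and $G$ the Barnes $G$-function. For $k \in \{1, 2, \ldots\}$ and $x > 0$, $$\sum_{n = 1}^\infty \left(H_n - \log\sqrt[k]{(n + x - 1)^{\overline{k}}} -\gamma + \frac{x-2}{n} + \frac{k}{2n} \right) = \gamma\left( x + \frac{k}{2} - 1\right) + \frac{1 -\log (2 \pi )}{2} + \frac{1}{k}\log\left[\frac{G(x+k)}{G(x)}\right].$$
   Context: The Barnes $G$-function is the entire function $G(z+1) = (2\pi)^{z/2} e^{-\frac{z+z^2(1+\gamma)}{2}} \prod_{m=1}^\infty \left(1+\frac{z}{m}\right)^m e^{-z+\frac{z^2}{2m}}$; it satisfies $G(1)=1$ and $G(z+1)=\Gamma(z)G(z)$. *)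

(* Defs.v *)
From Stdlib Require Import Reals.
From Coquelicot Require Import Coquelicot.
Open Scope R_scope.

Fixpoint harm (n : nat) : R :=
  match n with
  | O => 0
  | S n' => harm n' + / INR (S n')
  end.

Definition euler_gamma : R := real (Lim_seq (fun n => harm n - ln (INR n))).

Fixpoint rising (z : R) (k : nat) : R :=
  match k with
  | O => 1
  | S k' => rising z k' * (z + INR k')
  end.

Fixpoint barnes_pprod (z : R) (N : nat) : R :=
  match N with
  | O => 1
  | S N' => barnes_pprod z N' *
            ((1 + z / INR (S N')) ^ (S N') * exp (- z + z ^ 2 / (2 * INR (S N'))))
  end.

(* Barnes G-function on real arguments w > 0 (z = w - 1 > -1), via
   G(z+1) = (2 pi)^{z/2} exp(-(z + z^2(1+gamma))/2) prod_{m>=1} (1+z/m)^m exp(-z+z^2/(2m)) *)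
Definition BarnesG (w : R) : R :=
  let z := w - 1 in
  Rpower (2 * PI) (z / 2) * exp (- (z + z ^ 2 * (1 + euler_gamma)) / 2)
  * real (Lim_seq (barnes_pprod z)).

(* Main.v *)
Require Import Defs.
From Stdlib Require Import Reals Lra Lia.
From Coquelicot Require Import Coquelicot.
Open Scope R_scope.

Lemma tay_der (c : R) : -1 < c ->
  derivable_pt_lim (fun s => ln (1 + s) - s + s ^ 2 / 2) c (c ^ 2 / (1 + c)).
Proof.
  intros Hc. apply is_derive_Reals.
  auto_derive. lra. field. lra.
Qed.

Lemma taylor (u : R) : Rabs u <= 1/2 ->
  Rabs (ln (1 + u) - u + u ^ 2 / 2) <= 2 * Rabs u ^ 3.
Proof.
  intros Hu.
  assert (Hf0 : ln (1 + 0) - 0 + 0 ^ 2 / 2 = 0).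
  { rewrite Rplus_0_r, ln_1. simpl. field. }
  destruct (Rtotal_order u 0) as [Hn|[Hz|Hp]].
  - destruct (MVT_cor2 (fun s => ln (1 + s) - s + s ^ 2 / 2) (fun c => c ^ 2 / (1 + c)) u 0 Hn)
      as [c [Hc1 Hc2]].
    { intros c Hc. apply tay_der. apply Rabs_le_between in Hu. lra. }
    cbv beta in Hc1. rewrite Hf0 in Hc1.
    apply Rabs_le_between in Hu.
    rewrite (Rabs_left u) by lra.
    assert (Hq : 0 <= c^2/(1+c) <= 2 * u^2).
    { split. apply Rmult_le_pos. nra. left; apply Rinv_0_lt_compat; lra.
      apply Rmult_le_reg_r with (1 + c). lra. unfold Rdiv. rewrite Rmult_assoc, Rinv_l by lra. nra. }
    set (q := c^2/(1+c)) in *. set (f := ln (1 + u) - u + u ^ 2 / 2) in *.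
    assert (f = q * u) by lra.
    apply Rabs_le_between. split; nra.
  - subst. rewrite Hf0, Rabs_R0. simpl. lra.
  - destruct (MVT_cor2 (fun s => ln (1 + s) - s + s ^ 2 / 2) (fun c => c ^ 2 / (1 + c)) 0 u Hp)
      as [c [Hc1 Hc2]].
    { intros c Hc. apply tay_der. lra. }
    cbv beta in Hc1. rewrite Hf0 in Hc1.
    apply Rabs_le_between in Hu.
    rewrite (Rabs_right u) by lra.
    assert (Hq : 0 <= c^2/(1+c) <= u^2).
    { split. apply Rmult_le_pos. nra. left; apply Rinv_0_lt_compat; lra.
      apply Rmult_le_reg_r with (1 + c). lra. unfold Rdiv. rewrite Rmult_assoc, Rinv_l by lra. nra. }
    set (q := c^2/(1+c)) in *. set (f := ln (1 + u) - u + u ^ 2 / 2) in *.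
    assert (f = q * u) by lra.
    apply Rabs_le_between. split; nra.
Qed.

Lemma taylor1 (u : R) : Rabs u <= 1/2 -> Rabs (ln (1 + u) - u) <= 3/2 * u ^ 2.
Proof.
  intros Hu. pose proof (taylor u Hu) as H.
  apply Rabs_le_between in H. pose proof (Rabs_pos u).
  assert (Hu2 : u^2 = Rabs u ^ 2) by (rewrite pow2_abs; ring).
  apply Rabs_le_between. rewrite Hu2 in *. split; nra.
Qed.

Lemma lim_inv_n : is_lim_seq (fun n => / INR n) 0.
Proof.
  replace (Finite 0) with (Rbar_inv p_infty) by reflexivity.
  apply is_lim_seq_inv. apply is_lim_seq_INR. discriminate.
Qed.

Lemma lim_bound (u : nat -> R) (l C : R) (M : nat) :
  (forall n, (M <= n)%nat -> (1 <= n)%nat -> Rabs (u n - l) <= C / INR n) -> is_lim_seq u l.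
Proof.
  intros H.
  apply is_lim_seq_le_le_loc with (u := fun n => l - C * / INR n) (w := fun n => l + C * / INR n).
  - exists (S M). intros n Hn. specialize (H n ltac:(lia) ltac:(lia)).
    apply Rabs_le_between in H. unfold Rdiv in H. lra.
  - replace (Finite l) with (Finite (l - C * 0)) by (f_equal; ring).
    apply is_lim_seq_minus'. apply is_lim_seq_const.
    apply is_lim_seq_mult'. apply is_lim_seq_const. apply lim_inv_n.
  - replace (Finite l) with (Finite (l + C * 0)) by (f_equal; ring).
    apply is_lim_seq_plus'. apply is_lim_seq_const.
    apply is_lim_seq_mult'. apply is_lim_seq_const. apply lim_inv_n.
Qed.

Lemma mono_conv (u g : nat -> R) (M : nat) :
  (forall n, (M <= n)%nat -> Rabs (u (S n) - u n) <= g n - g (S n)) ->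
  is_lim_seq g 0 ->
  exists l : R, is_lim_seq u l /\ forall n, (M <= n)%nat -> Rabs (u n - l) <= g n.
Proof.
  intros H Hg.
  set (v := fun n => u (n + M)%nat + g (n + M)%nat).
  set (w := fun n => u (n + M)%nat - g (n + M)%nat).
  assert (Hgd : forall n, g (S n + M)%nat <= g (n + M)%nat).
  { intros n. specialize (H (n + M)%nat ltac:(lia)). pose proof (Rabs_pos (u (S (n + M)) - u (n + M)%nat)).
    simpl. lra. }
  assert (Hgl : is_lim_seq (fun n => g (n + M)%nat) 0) by (apply is_lim_seq_incr_n; exact Hg).
  assert (Hgp : forall n, 0 <= g (n + M)%nat).
  { intros n. apply (is_lim_seq_decr_compare (fun n => g (n + M)%nat) 0 Hgl). intros m. apply Hgd. }
  assert (Hvd : forall n, v (S n) <= v n).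
  { intros n. unfold v. specialize (H (n + M)%nat ltac:(lia)). apply Rabs_le_between in H. simpl. lra. }
  assert (Hwi : forall n, w n <= w (S n)).
  { intros n. unfold w. specialize (H (n + M)%nat ltac:(lia)). apply Rabs_le_between in H. simpl. lra. }
  assert (Hwv : forall n, w n <= v n) by (intros n; unfold w, v; specialize (Hgp n); lra).
  assert (Hvb : forall n, w 0%nat <= v n).
  { intros n. apply Rle_trans with (w n). 2: apply Hwv. induction n. lra. eapply Rle_trans. apply IHn. apply Hwi. }
  destruct (ex_finite_lim_seq_decr v (w 0%nat) Hvd Hvb) as [lv Hlv].
  assert (Hu : is_lim_seq (fun n => u (n + M)%nat) lv).
  { apply is_lim_seq_ext with (u := fun n => v n - g (n + M)%nat). intros n; unfold v; ring.
    replace (Finite lv) with (Finite (lv - 0)) by (f_equal; ring).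
    apply is_lim_seq_minus'; assumption. }
  assert (Hw : is_lim_seq w lv).
  { apply is_lim_seq_ext with (u := fun n => u (n + M)%nat - g (n + M)%nat). intros n; reflexivity.
    replace (Finite lv) with (Finite (lv - 0)) by (f_equal; ring).
    apply is_lim_seq_minus'; assumption. }
  exists lv. split.
  - apply is_lim_seq_incr_n with (N := M). exact Hu.
  - intros n Hn.
    pose proof (is_lim_seq_decr_compare v lv Hlv Hvd (n - M)%nat) as H1.
    pose proof (is_lim_seq_incr_compare w lv Hw Hwi (n - M)%nat) as H2.
    unfold v, w in H1, H2. cbv beta in H1, H2. assert (E : (n - M + M)%nat = n) by lia. rewrite E in H1, H2.
    apply Rabs_le_between. simpl. split; lra.
Qed.

Lemma lim_nln (t : R) :
  is_lim_seq (fun N => INR (S N) * ln (1 + t / INR (S N))) t.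
Proof.
  destruct (INR_unbounded (2 * Rabs t)) as [M HM].
  apply lim_bound with (C := 3/2 * t^2) (M := M). intros n Hn H1.
  assert (Hm : INR M <= INR n) by (apply le_INR; lia).
  assert (H1' : 1 <= INR n) by (apply (le_INR 1); lia).
  rewrite S_INR. set (m := INR n + 1).
  assert (Hmp : 0 < m) by (unfold m; lra).
  assert (Hu : Rabs (t / m) <= 1/2).
  { unfold Rdiv. rewrite Rabs_mult, (Rabs_right (/ m)) by (left; apply Rinv_0_lt_compat; lra).
    apply Rmult_le_reg_r with m. lra. rewrite Rmult_assoc, Rinv_l by lra. unfold m. lra. }
  pose proof (taylor1 _ Hu) as Ht.
  replace (m * ln (1 + t / m) - t) with (m * (ln (1 + t / m) - t / m)) by (field; lra).
  rewrite Rabs_mult, (Rabs_right m) by lra.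
  apply Rle_trans with (m * (3/2 * (t/m)^2)).
  apply Rmult_le_compat_l; lra.
  replace (m * (3/2 * (t/m)^2)) with (3/2 * t^2 / m) by (field; lra).
  unfold Rdiv. apply Rmult_le_compat_l. nra.
  apply Rinv_le_contravar; unfold m; lra.
Qed.

Definition bterm (z m : R) : R := m * ln (1 + z / m) - z + z ^ 2 / (2 * m).

Fixpoint Lz (z : R) (N : nat) : R :=
  match N with
  | O => 0
  | S N' => Lz z N' + bterm z (INR (S N'))
  end.

Lemma bterm_bound (z m : R) : 0 < m -> 2 * Rabs z <= m ->
  Rabs (bterm z m) <= 2 * Rabs z ^ 3 / m ^ 2.
Proof.
  intros Hm Hzm.
  assert (Hu : Rabs (z / m) <= 1/2).
  { unfold Rdiv. rewrite Rabs_mult, (Rabs_right (/ m)) by (left; apply Rinv_0_lt_compat; lra).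
    apply Rmult_le_reg_r with m. lra. rewrite Rmult_assoc, Rinv_l by lra. lra. }
  pose proof (taylor _ Hu) as Ht.
  unfold bterm.
  replace (m * ln (1 + z / m) - z + z ^ 2 / (2 * m)) with (m * (ln (1 + z / m) - z / m + (z / m) ^ 2 / 2)) by (field; lra).
  rewrite Rabs_mult, (Rabs_right m) by lra.
  apply Rle_trans with (m * (2 * Rabs (z / m) ^ 3)).
  apply Rmult_le_compat_l; lra.
  unfold Rdiv at 1. rewrite Rabs_mult, (Rabs_right (/ m)) by (left; apply Rinv_0_lt_compat; lra).
  right. field. lra.
Qed.

Lemma Lz_conv (z : R) : exists l : R, is_lim_seq (Lz z) l.
Proof.
  destruct (INR_unbounded (2 * Rabs z)) as [M0 HM].
  set (K := 2 * Rabs z ^ 3).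
  destruct (mono_conv (Lz z) (fun n => K * / INR n) (S M0)) as [l [Hl _]].
  - intros n Hn. change (Lz z (S n)) with (Lz z n + bterm z (INR (S n))).
    assert (Hm : INR M0 + 1 <= INR n) by (rewrite <- S_INR; apply le_INR; lia).
    replace (Lz z n + bterm z (INR (S n)) - Lz z n) with (bterm z (INR (S n))) by ring.
    rewrite S_INR.
    assert (HK : 0 <= K) by (unfold K; pose proof (Rabs_pos z); apply Rmult_le_pos; [lra| apply pow_le; lra]).
    pose proof (pos_INR M0).
    eapply Rle_trans. apply bterm_bound; lra.
    fold K.
    replace (K * / INR n - K * / (INR n + 1)) with (K / (INR n * (INR n + 1))) by (field; lra).
    unfold Rdiv. apply Rmult_le_compat_l. lra.
    apply Rinv_le_contravar. nra. nra.
  - replace (Finite 0) with (Rbar_mult K 0) by (simpl; f_equal; ring).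
    apply is_lim_seq_scal_l. apply lim_inv_n.
  - exists l. exact Hl.
Qed.

Definition uE (n : nat) : R := harm n - ln (INR n) - / 2 * / INR n.

Lemma uE_step (n : nat) : (1 <= n)%nat ->
  Rabs (uE (S n) - uE n) <= 2 * / INR n ^ 2 - 2 * / INR (S n) ^ 2.
Proof.
  intros Hn. unfold uE.
  change (harm (S n)) with (harm n + / INR (S n)).
  rewrite S_INR.
  assert (H1 : 1 <= INR n) by (apply (le_INR 1); lia).
  set (r := INR n) in *.
  set (v := - / (r + 1)).
  assert (Hv : Rabs v <= 1/2).
  { unfold v. rewrite Rabs_Ropp, Rabs_right by (left; apply Rinv_0_lt_compat; lra).
    apply Rmult_le_reg_r with (r + 1). lra. rewrite Rinv_l by lra. lra. }
  pose proof (taylor v Hv) as Ht.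
  assert (Hl : ln (1 + v) = ln r - ln (r + 1)).
  { rewrite <- ln_div by lra. f_equal. unfold v. field. lra. }
  rewrite Hl in Ht.
  assert (Hv3 : Rabs v ^ 3 = / (r + 1) ^ 3).
  { unfold v. rewrite Rabs_Ropp, Rabs_right by (left; apply Rinv_0_lt_compat; lra). field. lra. }
  rewrite Hv3 in Ht.
  replace (harm n + / (r + 1) - ln (r + 1) - / 2 * / (r + 1) - (harm n - ln r - / 2 * / r))
    with ((ln r - ln (r + 1) - v + v ^ 2 / 2) + / (2 * r * (r + 1) ^ 2)) by (unfold v; field; lra).
  eapply Rle_trans. apply Rabs_triang.
  rewrite (Rabs_right (/ (2 * r * (r + 1) ^ 2))) by (left; apply Rinv_0_lt_compat; apply Rmult_lt_0_compat; [lra| apply pow_lt; lra]).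
  apply Rle_trans with (2 * / (r + 1) ^ 3 + / (2 * r * (r + 1) ^ 2)). lra.
  apply Rminus_le. 
  replace (2 * / (r + 1) ^ 3 + / (2 * r * (r + 1) ^ 2) - (2 * / r ^ 2 - 2 * / (r + 1) ^ 2))
    with (- (3 * r^2 + 11 * r + 4) / (2 * r^2 * (r+1)^3)) by (field; lra).
  unfold Rdiv. rewrite Ropp_mult_distr_l_reverse. apply Rge_le, Ropp_0_le_ge_contravar.
  apply Rmult_le_pos. nra. left. apply Rinv_0_lt_compat. apply Rmult_lt_0_compat. nra. apply pow_lt; lra.
Qed.

Lemma gamma_facts :
  is_lim_seq (fun n => harm n - ln (INR n)) euler_gamma /\
  forall n, (1 <= n)%nat -> Rabs (uE n - euler_gamma) <= 2 * / INR n ^ 2.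
Proof.
  destruct (mono_conv uE (fun n => 2 * / INR n ^ 2) 1) as [g [Hg Hb]].
  - intros n Hn. apply uE_step. exact Hn.
  - replace (Finite 0) with (Finite (2 * (0 * 0))) by (f_equal; ring).
    apply is_lim_seq_mult'. apply is_lim_seq_const.
    apply is_lim_seq_ext with (u := fun n => / INR n * / INR n).
    { intros n. simpl. rewrite Rmult_1_r. destruct (Req_dec (INR n) 0) as [E|E].
      rewrite E, Rmult_0_r, Rinv_0. ring. rewrite Rinv_mult. ring. }
    apply is_lim_seq_mult'. apply lim_inv_n. apply lim_inv_n.
  - assert (He : is_lim_seq (fun n => harm n - ln (INR n)) g).
    { apply is_lim_seq_ext with (u := fun n => uE n + / 2 * / INR n).
      intros n. unfold uE. ring.
      replace (Finite g) with (Finite (g + / 2 * 0)) by (f_equal; ring).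
      apply is_lim_seq_plus'. exact Hg. apply is_lim_seq_mult'. apply is_lim_seq_const. apply lim_inv_n. }
    assert (Eg : euler_gamma = g).
    { unfold euler_gamma. rewrite (is_lim_seq_unique _ _ He). reflexivity. }
    rewrite Eg. split. exact He. exact Hb.
Qed.

Lemma gamma_rate :
  is_lim_seq (fun N => INR (S N) * (harm (S N) - ln (INR (S N)) - euler_gamma)) (1/2).
Proof.
  destruct gamma_facts as [_ Hb].
  apply lim_bound with (C := 2) (M := 1%nat). intros n Hn _.
  specialize (Hb (S n) ltac:(lia)). unfold uE in Hb.
  assert (H1 : 1 <= INR n) by (apply (le_INR 1); lia).
  rewrite S_INR in *.
  replace ((INR n + 1) * (harm (S n) - ln (INR n + 1) - euler_gamma) - 1 / 2)
    with ((INR n + 1) * (harm (S n) - ln (INR n + 1) - / 2 * / (INR n + 1) - euler_gamma)) by (field; lra).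
  rewrite Rabs_mult, (Rabs_right (INR n + 1)) by lra.
  apply Rle_trans with ((INR n + 1) * (2 * / (INR n + 1) ^ 2)).
  apply Rmult_le_compat_l; lra.
  apply Rminus_le. replace ((INR n + 1) * (2 * / (INR n + 1) ^ 2) - 2 / INR n) with (- (2 * / (INR n * (INR n + 1)))) by (field; lra).
  apply Rge_le, Ropp_0_le_ge_contravar.
  apply Rmult_le_pos. lra. left. apply Rinv_0_lt_compat. nra.
Qed.

Lemma rising_pos (y : R) (k : nat) : 0 < y -> 0 < rising y k.
Proof.
  intros Hy. induction k as [|k IH]; simpl. lra.
  apply Rmult_lt_0_compat. exact IH. pose proof (pos_INR k). lra.
Qed.

Lemma rising_shift_mul (y : R) (k : nat) : rising (y + 1) k * y = rising y k * (y + INR k).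
Proof.
  induction k as [|k IH]. simpl. ring.
  change (rising (y + 1) (S k)) with (rising (y + 1) k * (y + 1 + INR k)).
  change (rising y (S k)) with (rising y k * (y + INR k)).
  rewrite S_INR.
  replace (rising (y + 1) k * (y + 1 + INR k) * y) with (rising (y + 1) k * y * (y + 1 + INR k)) by ring.
  rewrite IH. ring.
Qed.

Lemma rising_shift (y : R) (k : nat) : 0 < y ->
  ln (rising (y + 1) k) = ln (rising y k) + ln (y + INR k) - ln y.
Proof.
  intros Hy. pose proof (pos_INR k).
  assert (Hq : ln (rising (y + 1) k) + ln y = ln (rising y k) + ln (y + INR k)).
  { rewrite <- !ln_mult. rewrite rising_shift_mul. reflexivity.
    apply rising_pos; lra. lra. apply rising_pos; lra. lra. }
  lra.
Qed.

Lemma lim_rising (x : R) (k : nat) : 0 < x ->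
  is_lim_seq (fun N => INR (S N) * (ln (rising (INR (S N) + x) k) - INR k * ln (INR (S N))))
    (INR k * x + INR k * (INR k - 1) / 2).
Proof.
  intros Hx. induction k as [|k IH].
  - simpl. apply is_lim_seq_ext with (u := fun _ => 0).
    intros n. rewrite ln_1. ring.
    replace (Finite (0 * x + 0 * (0 - 1) / 2)) with (Finite 0) by (f_equal; field). apply is_lim_seq_const.
  - apply is_lim_seq_ext with (u := fun N => INR (S N) * (ln (rising (INR (S N) + x) k) - INR k * ln (INR (S N)))
                                          + INR (S N) * ln (1 + (x + INR k) / INR (S N))).
    + intros N. change (rising (INR (S N) + x) (S k)) with (rising (INR (S N) + x) k * (INR (S N) + x + INR k)).
      pose proof (pos_INR N). pose proof (pos_INR k).
      rewrite ln_mult. 2: apply rising_pos; rewrite S_INR; lra. 2: rewrite S_INR; lra.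
      replace (1 + (x + INR k) / INR (S N)) with ((INR (S N) + x + INR k) / INR (S N)) by (field; rewrite S_INR; lra).
      rewrite ln_div by (rewrite S_INR; lra).
      rewrite (S_INR k). ring.
    + replace (Finite (INR (S k) * x + INR (S k) * (INR (S k) - 1) / 2))
        with (Finite ((INR k * x + INR k * (INR k - 1) / 2) + (x + INR k))) by (f_equal; rewrite S_INR; field).
      apply is_lim_seq_plus'. exact IH. apply lim_nln.
Qed.

Lemma bterm_eq (z m : R) : 0 < m -> 0 < m + z ->
  bterm z m = m * (ln (m + z) - ln m) - z + z ^ 2 / (2 * m).
Proof.
  intros Hm Hmz. unfold bterm. rewrite <- ln_div by lra.
  replace (1 + z / m) with ((m + z) / m) by (field; lra). reflexivity.
Qed.

Definition RHSn (k : nat) (x g : R) (n : nat) : R :=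
  INR n * harm n - INR n * g - INR n / INR k * ln (rising (INR n + x) k)
  + (Lz (x + INR k - 1) n - Lz (x - 1) n) / INR k.

Lemma step_eq (k : nat) (x g : R) (N : nat) : (1 <= k)%nat -> 0 < x ->
  RHSn k x g (S N) - RHSn k x g N =
   (let n := INR (S N) in
       harm (S N) - / INR k * ln (rising (n + x - 1) k) - g
       + (x - 2) / n + INR k / (2 * n)).
Proof.
  intros Hk Hx. unfold RHSn. cbv zeta.
  change (harm (S N)) with (harm N + / INR (S N)).
  change (Lz (x + INR k - 1) (S N)) with (Lz (x + INR k - 1) N + bterm (x + INR k - 1) (INR (S N))).
  change (Lz (x - 1) (S N)) with (Lz (x - 1) N + bterm (x - 1) (INR (S N))).
  assert (Hk' : 1 <= INR k) by (apply (le_INR 1); lia).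
  pose proof (pos_INR N) as HN.
  rewrite S_INR. set (m := INR N) in *.
  rewrite !bterm_eq by lra.
  replace (m + 1 + x - 1) with (m + x) by ring.
  replace (m + 1 + x) with (m + x + 1) by ring.
  rewrite (rising_shift (m + x)) by lra.
  replace (m + 1 + (x + INR k - 1)) with (m + x + INR k) by ring.
  replace (m + 1 + (x - 1)) with (m + x) by ring.
  field. lra.
Qed.

Lemma pprod_exp (z : R) (N : nat) : -1 < z -> barnes_pprod z N = exp (Lz z N).
Proof.
  intros Hz. induction N as [|N IH].
  - simpl. rewrite exp_0. reflexivity.
  - change (barnes_pprod z (S N)) with (barnes_pprod z N *
            ((1 + z / INR (S N)) ^ (S N) * exp (- z + z ^ 2 / (2 * INR (S N))))).
    change (Lz z (S N)) with (Lz z N + bterm z (INR (S N))).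
    rewrite IH. unfold bterm.
    assert (Hm : 1 <= INR (S N)) by (apply (le_INR 1); lia).
    assert (Hp : 0 < 1 + z / INR (S N)).
    { replace (1 + z / INR (S N)) with ((INR (S N) + z) / INR (S N)) by (field; lra).
      apply Rdiv_lt_0_compat; lra. }
    rewrite <- (exp_ln ((1 + z / INR (S N)) ^ S N)) by (apply pow_lt; exact Hp).
    rewrite ln_pow by exact Hp.
    rewrite <- !exp_plus. f_equal. ring.
Qed.

Lemma barnes_lim (z : R) (l : R) : -1 < z -> is_lim_seq (Lz z) l ->
  Lim_seq (barnes_pprod z) = Finite (exp l).
Proof.
  intros Hz Hl. apply is_lim_seq_unique.
  apply is_lim_seq_ext with (u := fun n => exp (Lz z n)).
  intros n. rewrite pprod_exp by exact Hz. reflexivity.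
  apply is_lim_seq_continuous. apply derivable_continuous_pt, derivable_pt_exp. exact Hl.
Qed.

Lemma barnes_exp (w l : R) : -1 < w - 1 -> is_lim_seq (Lz (w - 1)) l ->
  BarnesG w = exp ((w - 1) / 2 * ln (2 * PI) + (- ((w - 1) + (w - 1) ^ 2 * (1 + euler_gamma)) / 2) + l).
Proof.
  intros Hz Hl. unfold BarnesG. cbv zeta. rewrite (barnes_lim _ l Hz Hl). simpl real.
  unfold Rpower. rewrite !exp_plus. reflexivity.
Qed.

Theorem mainTheorem12 (k : nat) (hk : (1 <= k)%nat) (x : R) (hx : 0 < x) :
  is_series
    (fun i : nat =>
       let n := INR (S i) in
       harm (S i) - / INR k * ln (rising (n + x - 1) k) - euler_gamma
       + (x - 2) / n + INR k / (2 * n))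
    (euler_gamma * (x + INR k / 2 - 1) + (1 - ln (2 * PI)) / 2
     + / INR k * ln (BarnesG (x + INR k) / BarnesG x)).
Proof.
  set (f := fun i : nat =>
       let n := INR (S i) in
       harm (S i) - / INR k * ln (rising (n + x - 1) k) - euler_gamma
       + (x - 2) / n + INR k / (2 * n)).
  assert (Hk : 1 <= INR k) by (apply (le_INR 1); lia).
  assert (Hsum : forall N, sum_n f N = RHSn k x euler_gamma (S N)).
  { induction N as [|N IH].
    - rewrite sum_O. transitivity (RHSn k x euler_gamma 1 - RHSn k x euler_gamma 0).
      symmetry. exact (step_eq k x euler_gamma 0 hk hx).
      assert (E : RHSn k x euler_gamma 0 = 0).
      { unfold RHSn. simpl INR. simpl harm. simpl Lz. field. lra. }
      rewrite E. exact (Rminus_0_r _).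
    - rewrite sum_Sn, IH.
      replace (f (S N)) with (RHSn k x euler_gamma (S (S N)) - RHSn k x euler_gamma (S N)).
      exact (Rplus_minus _ _). exact (step_eq k x euler_gamma (S N) hk hx). }
  destruct (Lz_conv (x + INR k - 1)) as [l1 Hl1].
  destruct (Lz_conv (x - 1)) as [l0 Hl0].
  assert (Hlim : is_lim_seq (sum_n f)
     (1/2 - / INR k * (INR k * x + INR k * (INR k - 1) / 2) + (l1 - l0) / INR k)).
  { apply is_lim_seq_ext with (u := fun N =>
        INR (S N) * (harm (S N) - ln (INR (S N)) - euler_gamma)
        - / INR k * (INR (S N) * (ln (rising (INR (S N) + x) k) - INR k * ln (INR (S N))))
        + (Lz (x + INR k - 1) (S N) - Lz (x - 1) (S N)) / INR k).
    { intros N. rewrite Hsum. unfold RHSn. field. lra. }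
    apply is_lim_seq_plus'. apply is_lim_seq_minus'. apply gamma_rate.
    apply is_lim_seq_mult'. apply is_lim_seq_const. apply lim_rising. exact hx.
    apply is_lim_seq_mult'. apply is_lim_seq_minus'.
    apply (is_lim_seq_incr_1 (Lz (x + INR k - 1))). exact Hl1.
    apply (is_lim_seq_incr_1 (Lz (x - 1))). exact Hl0.
    apply is_lim_seq_const. }
  rewrite (barnes_exp (x + INR k) l1) by lra || exact Hl1.
  rewrite (barnes_exp x l0) by lra || exact Hl0.
  rewrite ln_div by apply exp_pos. rewrite !ln_exp.
  replace (euler_gamma * (x + INR k / 2 - 1) + (1 - ln (2 * PI)) / 2 +
     / INR k *
     ((x + INR k - 1) / 2 * ln (2 * PI) +
      - (x + INR k - 1 + (x + INR k - 1) ^ 2 * (1 + euler_gamma)) / 2 + l1 -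
      ((x - 1) / 2 * ln (2 * PI) + - (x - 1 + (x - 1) ^ 2 * (1 + euler_gamma)) / 2 + l0)))
    with (1/2 - / INR k * (INR k * x + INR k * (INR k - 1) / 2) + (l1 - l0) / INR k)
    by (field; lra).
  exact Hlim.
Qed.
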